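(* Let $\mathfrak{U}$ be an operator ideal on $\mathcal{H}$ as in the context, and let $T\in\mathfrak{U}$. Then: (1) $T$ is approximately right invertible in $\mathfrak{U}$ if and only if $T(\mathcal{H})$ is dense in $\mathcal{H}$; (2) $T$ is approximately left invertible in $\mathfrak{U}$ if and only if $\ker T=\{0\}$.
   Context: $\mathcal{H}$ is an infinite-dimensional separable complex Hilbert space, $\mathcal{B}(\mathcal{H})$ the bounded operators with operator norm $\|\cdot\|$, $\mathfrak{F}(\mathcal{H})$ the finite-rank operators and $\mathcal{K}(\mathcal{H})$ the compact operators. For $f,g\in\mathcal{H}$, $(f\otimes g)(h)=\langle h,g\rangle f$. The $n$-th approximation number of $S\in\mathcal{B}(\mathcal{H})$ is $a_n(S)=\inf\{\|S-F\|:\mathrm{rank}(F)<n\}$. An operator ideal is a linear subspace $\mathfrak{U}\subseteq\mathcal{B}(\mathcal{H})$ such that $S\in\mathcal{B}(\mathcal{H})$, $T\in\mathfrak{U}$ and $a_n(S)\le a_n(T)$ for all $n$ imply $S\in\mathfrak{U}$. Standing assumptions: $\mathfrak{F}(\mathcal{H})\subseteq\mathfrak{U}\subseteq\mathcal{K}(\mathcal{H})$; $\mathfrak{U}$ carries a norm $\|\cdot\|_{\mathfrak{U}}$ satisfying $\|ATB\|_{\mathfrak{U}}\le\|A\|\,\|T\|_{\mathfrak{U}}\,\|B\|$ for $A,B\in\mathcal{B}(\mathcal{H})$, $T\in\mathfrak{U}$, and $\|T^*\|_{\mathfrak{U}}=\|T\|_{\mathfrak{U}}$ for $T\in\mathfrak{U}$;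 $\mathfrak{U}$ is complete in this norm; $\mathfrak{F}(\mathcal{H})$ is $\|\cdot\|_{\mathfrak{U}}$-dense in $\mathfrak{U}$; and $\|f\otimes g\|_{\mathfrak{U}}=\|f\|\,\|g\|$ for all $f,g\in\mathcal{H}$. An approximate identity in $\mathfrak{U}$ is a net $(S_j)$ in $\mathfrak{U}$ with $\|S_jA-A\|_{\mathfrak{U}}\to0$ and $\|AS_j-A\|_{\mathfrak{U}}\to0$ for all $A\in\mathfrak{U}$. $T$ is approximately right (resp. left) invertible in $\mathfrak{U}$ if there is a net $(R_j)$ (resp. $(L_j)$) in $\mathfrak{U}$ such that $(TR_j)$ (resp. $(L_jT)$) is an approximate identity in $\mathfrak{U}$. *)

(* Defs.v *)
From mathcomp Require Import all_boot all_order all_algebra.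
From mathcomp Require Import all_classical all_reals.
From mathcomp Require Import complex.
Set Implicit Arguments.
Unset Strict Implicit.
Unset Printing Implicit Defensive.
Import Order.TTheory GRing.Theory Num.Theory.
Local Open Scope ring_scope.
Local Open Scope classical_set_scope.

Section OperatorIdeals.
Variable R : realType.
Variable H : lmodType R[i].
Variable ip : H -> H -> R[i].

Definition is_inner_product : Prop :=
  [/\ (forall (a : R[i]) (x y z : H), ip (a *: x + y) z = a * ip x z + ip y z),
      (forall x y : H, ip y x = (ip x y)^*),
      (forall x : H, 0 <= ip x x) &
      (forall x : H, ip x x = 0 -> x = 0)].

Definition hnorm (x : H) : R := Num.sqrt (complex.Re (ip x x)).

Definition cauchy_seq (u : nat -> H) : Prop :=
  forall eps : R, 0 < eps -> exists N : nat,
    forall m n : nat, (N <= m)%N -> (N <= n)%N -> hnorm (u m - u n) < eps.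

Definition seq_converges_to (u : nat -> H) (l : H) : Prop :=
  forall eps : R, 0 < eps -> exists N : nat,
    forall n : nat, (N <= n)%N -> hnorm (u n - l) < eps.

Definition lin_independent (n : nat) (v : 'I_n -> H) : Prop :=
  forall c : 'I_n -> R[i], \sum_(i < n) c i *: v i = 0 -> forall i, c i = 0.

Definition is_inf_dim_separable_hilbert : Prop :=
  [/\ is_inner_product,
      (forall u : nat -> H, cauchy_seq u -> exists l, seq_converges_to u l),
      (exists e : nat -> H, forall (x : H) (eps : R), 0 < eps ->
          exists n : nat, hnorm (x - e n) < eps) &
      (forall n : nat, exists v : 'I_n -> H, lin_independent v)].

Definition linear_op (T : H -> H) : Prop :=
  forall (a : R[i]) (x y : H), T (a *: x + y) = a *: T x + T y.

Definition bounded_op (T : H -> H) : Prop :=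
  linear_op T /\ exists M : R, forall x : H, hnorm (T x) <= M * hnorm x.

Definition opnorm (T : H -> H) : R :=
  sup [set hnorm (T x) | x in [set x : H | hnorm x <= 1]].

Definition rank_lt (F : H -> H) (n : nat) : Prop :=
  exists (k : nat) (v : 'I_k -> H), (k < n)%N /\
    forall x : H, exists c : 'I_k -> R[i], F x = \sum_(i < k) c i *: v i.

Definition finite_rank (F : H -> H) : Prop :=
  bounded_op F /\ exists n : nat, rank_lt F n.

Definition compact_op (T : H -> H) : Prop :=
  bounded_op T /\
  forall u : nat -> H, (exists M : R, forall n, hnorm (u n) <= M) ->
    exists (phi : nat -> nat) (l : H),
      (forall n, (phi n < phi n.+1)%N) /\ seq_converges_to (fun n => T (u (phi n))) l.

Definition approx_number (S : H -> H) (n : nat) : R :=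
  inf [set opnorm (fun x => S x - F x) | F in [set F : H -> H | bounded_op F /\ rank_lt F n]].

Definition tensor (f g : H) : H -> H := fun h => ip h g *: f.

Definition is_adjoint (T S : H -> H) : Prop :=
  forall x y : H, ip (T x) y = ip x (S y).

Definition is_normed_operator_ideal (U : set (H -> H)) (nU : (H -> H) -> R) : Prop :=
  ((forall T, U T -> bounded_op T) /\
   U (fun _ => 0) /\
   (forall S T, U S -> U T -> U (fun x => S x + T x)) /\
   (forall (a : R[i]) T, U T -> U (fun x => a *: T x))) /\
  (forall S T, bounded_op S -> U T ->
      (forall n : nat, (0 < n)%N -> approx_number S n <= approx_number T n) -> U S) /\
  (forall F, finite_rank F -> U F) /\
  (forall T, U T -> compact_op T) /\
  ((forall T, U T -> 0 <= nU T) /\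
   (forall T, U T -> nU T = 0 -> T = (fun _ => 0)) /\
   (forall S T, U S -> U T -> nU (fun x => S x + T x) <= nU S + nU T) /\
   (forall (a : R[i]) T, U T -> nU (fun x => a *: T x) = complex.Re `|a| * nU T)) /\
  (forall A T B, bounded_op A -> U T -> bounded_op B ->
      nU (fun x => A (T (B x))) <= opnorm A * nU T * opnorm B) /\
  (forall T S, U T -> is_adjoint T S -> nU S = nU T) /\
  (forall u : nat -> (H -> H), (forall n, U (u n)) ->
      (forall eps : R, 0 < eps -> exists N : nat, forall m n : nat,
          (N <= m)%N -> (N <= n)%N -> nU (fun x => u m x - u n x) < eps) ->
      exists T, U T /\ forall eps : R, 0 < eps -> exists N : nat, forall n : nat,
          (N <= n)%N -> nU (fun x => u n x - T x) < eps) /\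
  (forall T, U T -> forall eps : R, 0 < eps ->
      exists F, finite_rank F /\ nU (fun x => T x - F x) < eps) /\
  (forall f g : H, nU (tensor f g) = hnorm f * hnorm g).

Definition directed (I : Type) (le : I -> I -> Prop) : Prop :=
  [/\ inhabited I, (forall i, le i i),
      (forall i j k, le i j -> le j k -> le i k) &
      (forall i j, exists k, le i k /\ le j k)].

Definition approx_identity (U : set (H -> H)) (nU : (H -> H) -> R)
    (I : Type) (le : I -> I -> Prop) (S : I -> (H -> H)) : Prop :=
  (forall j, U (S j)) /\
  forall A, U A -> forall eps : R, 0 < eps -> exists j0 : I, forall j, le j0 j ->
    nU (fun x => S j (A x) - A x) < eps /\ nU (fun x => A (S j x) - A x) < eps.

Definition approx_right_invertible (U : set (H -> H)) (nU : (H -> H) -> R)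
    (T : H -> H) : Prop :=
  exists (I : Type) (le : I -> I -> Prop) (Rj : I -> (H -> H)),
    directed le /\ (forall j, U (Rj j)) /\
    approx_identity U nU le (fun j x => T (Rj j x)).

Definition approx_left_invertible (U : set (H -> H)) (nU : (H -> H) -> R)
    (T : H -> H) : Prop :=
  exists (I : Type) (le : I -> I -> Prop) (Lj : I -> (H -> H)),
    directed le /\ (forall j, U (Lj j)) /\
    approx_identity U nU le (fun j x => Lj j (T x)).

Definition dense_range (T : H -> H) : Prop :=
  forall (y : H) (eps : R), 0 < eps -> exists x : H, hnorm (T x - y) < eps.

Definition trivial_kernel (T : H -> H) : Prop :=
  forall x : H, T x = 0 -> x = 0.

End OperatorIdeals.

(* Main.v *)
Require Import Defs.
From mathcomp Require Import all_boot all_order all_algebra.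
From mathcomp Require Import all_classical all_reals.
From mathcomp Require Import complex.
From mathcomp Require Import ring lra.
Set Implicit Arguments.
Unset Strict Implicit.
Unset Printing Implicit Defensive.
Import Order.TTheory GRing.Theory Num.Theory.
Local Open Scope complex_scope.
Local Open Scope ring_scope.
Local Open Scope classical_set_scope.
Section Basic.
Variable R : realType.
Implicit Types (a b z : R[i]).

Definition ca (z : R[i]) : R := complex.Re `|z|.

Lemma caE z : ca z = Num.sqrt (complex.Re z ^+ 2 + complex.Im z ^+ 2).
Proof. by rewrite /ca normc_def. Qed.

Lemma caC z : (ca z)%:C = `|z|.
Proof. by rewrite /ca normc_def. Qed.

Lemma conjE z : z^* = (complex.Re z) -i* (complex.Im z).
Proof. by case: z. Qed.

Lemma ca_ge0 z : 0 <= ca z.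
Proof. by rewrite caE sqrtr_ge0. Qed.

Lemma caM a b : ca (a * b) = ca a * ca b.
Proof. apply: complexI; by rewrite rmorphM /= !caC normrM. Qed.

Lemma caD a b : ca (a + b) <= ca a + ca b.
Proof. by rewrite -lecR rmorphD /= !caC ler_normD. Qed.

Lemma caN a : ca (- a) = ca a.
Proof. by apply: complexI; rewrite !caC normrN. Qed.

Lemma caJ a : ca (a^*) = ca a.
Proof. by apply: complexI; rewrite !caC norm_conjC. Qed.

Lemma ca0 : ca 0 = 0.
Proof. by apply: complexI; rewrite !caC normr0. Qed.

Lemma ca_eq0 a : ca a = 0 -> a = 0.
Proof. by move=> h; apply/normr0_eq0; rewrite -caC h. Qed.

Lemma caR (x : R) : ca x%:C = `|x|.
Proof. by rewrite caE /= expr0n /= addr0 sqrtr_sqr. Qed.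

Lemma ca_sqr a : ca a ^+ 2 = complex.Re a ^+ 2 + complex.Im a ^+ 2.
Proof. by rewrite caE sqr_sqrtr // addr_ge0 // sqr_ge0. Qed.

Lemma Re_le_ca a : complex.Re a <= ca a.
Proof.
rewrite caE; apply: (le_trans (ler_norm _)); rewrite -sqrtr_sqr.
by rewrite ler_wsqrtr // lerDl sqr_ge0.
Qed.

Lemma mulJ a : a * a^* = (ca a ^+ 2)%:C.
Proof. case: a => p q; rewrite ca_sqr /=; apply/eqP; rewrite eq_complex /=; apply/andP; split; apply/eqP; ring. Qed.

End Basic.

Section IP.
Variables (R : realType) (H : lmodType R[i]) (ip : H -> H -> R[i]).
Hypothesis hip : is_inner_product ip.
Implicit Types (a b c : R[i]) (x y z : H).

Lemma ipDZl a x y z : ip (a *: x + y) z = a * ip x z + ip y z.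
Proof. by case: hip. Qed.

Lemma ipC x y : ip y x = (ip x y)^*.
Proof. by case: hip. Qed.

Lemma ip0l z : ip 0 z = 0.
Proof.
have := ipDZl 1 0 0 z; rewrite scaler0 addr0 mul1r => h.
by apply: (addrI (ip 0 z)); rewrite addr0 -h.
Qed.

Lemma ipDl x y z : ip (x + y) z = ip x z + ip y z.
Proof. by rewrite -[x in LHS]scale1r ipDZl mul1r. Qed.

Lemma ipZl a x z : ip (a *: x) z = a * ip x z.
Proof. by rewrite -[_ *: _]addr0 ipDZl ip0l addr0. Qed.

Lemma ipNl x z : ip (- x) z = - ip x z.
Proof. by rewrite -scaleN1r ipZl mulN1r. Qed.

Lemma ipBl x y z : ip (x - y) z = ip x z - ip y z.
Proof. by rewrite ipDl ipNl. Qed.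

Lemma ip0r z : ip z 0 = 0.
Proof. by rewrite ipC ip0l conjC0. Qed.

Lemma ipDr x y z : ip z (x + y) = ip z x + ip z y.
Proof. by rewrite [LHS]ipC ipDl rmorphD (ipC x z) (ipC y z). Qed.

Lemma ipZr a x z : ip z (a *: x) = a^* * ip z x.
Proof. by rewrite [LHS]ipC ipZl rmorphM (ipC x z). Qed.

Lemma ipNr x z : ip z (- x) = - ip z x.
Proof. by rewrite [LHS]ipC ipNl rmorphN (ipC x z). Qed.

Lemma ipBr x y z : ip z (x - y) = ip z x - ip z y.
Proof. by rewrite ipDr ipNr. Qed.

Lemma ip_suml (I : Type) (r : seq I) (P : pred I) (F : I -> H) z :
  ip (\sum_(i <- r | P i) F i) z = \sum_(i <- r | P i) ip (F i) z.
Proof. exact: (big_morph (fun x => ip x z) (fun x y => ipDl x y z) (ip0l z)). Qed.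

Lemma ip_sumr (I : Type) (r : seq I) (P : pred I) (F : I -> H) z :
  ip z (\sum_(i <- r | P i) F i) = \sum_(i <- r | P i) ip z (F i).
Proof. exact: (big_morph (fun x => ip z x) (fun x y => ipDr x y z) (ip0r z)). Qed.

Definition nsq x : R := complex.Re (ip x x).

Lemma ipxx x : ip x x = (nsq x)%:C.
Proof.
case: hip => _ _ h _; have := h x; rewrite lecE /= => /andP [/eqP hi _].
by rewrite /nsq; case: (ip x x) hi => p q /= ->.
Qed.

Lemma nsq_ge0 x : 0 <= nsq x.
Proof. by case: hip => _ _ h _; have := h x; rewrite ipxx lecR. Qed.

Lemma nsq_eq0 x : nsq x = 0 -> x = 0.
Proof. by case: hip => _ _ _ h e; apply: h; rewrite ipxx e. Qed.

Lemma hnormE x : hnorm ip x = Num.sqrt (nsq x).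
Proof. by []. Qed.

Lemma hnorm_ge0 x : 0 <= hnorm ip x.
Proof. exact: sqrtr_ge0. Qed.

Lemma hnormK x : hnorm ip x ^+ 2 = nsq x.
Proof. by rewrite hnormE sqr_sqrtr // nsq_ge0. Qed.

Lemma hnorm_eq0 x : hnorm ip x = 0 -> x = 0.
Proof. by move=> h; apply: nsq_eq0; rewrite -hnormK h expr0n. Qed.

Lemma nsq0 : nsq 0 = 0.
Proof. by rewrite /nsq ip0l. Qed.

Lemma hnorm0 : hnorm ip 0 = 0.
Proof. by rewrite hnormE nsq0 sqrtr0. Qed.

Lemma nsqZ a x : nsq (a *: x) = ca a ^+ 2 * nsq x.
Proof.
rewrite /nsq ipZl ipZr mulrA mulJ ipxx /=.
by rewrite mul0r subr0.
Qed.

Lemma hnormZ a x : hnorm ip (a *: x) = ca a * hnorm ip x.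
Proof. by rewrite !hnormE nsqZ sqrtrM ?sqr_ge0 // sqrtr_sqr ger0_norm // ca_ge0. Qed.

Lemma hnormN x : hnorm ip (- x) = hnorm ip x.
Proof. by rewrite -scaleN1r hnormZ caN -(rmorph1 (real_complex R)) caR normr1 mul1r. Qed.

Lemma hnormB x y : hnorm ip (x - y) = hnorm ip (y - x).
Proof. by rewrite -hnormN opprB. Qed.

Definition rip x y : R := complex.Re (ip x y).

Lemma ripC x y : rip y x = rip x y.
Proof. by rewrite /rip ipC conjE. Qed.

Lemma ripDl x y z : rip (x + y) z = rip x z + rip y z.
Proof. by rewrite /rip ipDl; case: (ip x z) => ? ?; case: (ip y z) => ? ?. Qed.

Lemma ripRl (s : R) x z : rip (s%:C *: x) z = s * rip x z.
Proof. by rewrite /rip ipZl; case: (ip x z) => p q /=; rewrite mul0r subr0. Qed.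

Lemma nsqD x y : nsq (x + y) = nsq x + nsq y + 2 * rip x y.
Proof.
rewrite /nsq ipDl !ipDr; have := ripC x y; rewrite /rip.
move: (ip x x) (ip x y) (ip y x) (ip y y) => [a1 a2] [b1 b2] [c1 c2] [d1 d2] /= ->.
ring.
Qed.

Lemma rip_cs x y : rip x y ^+ 2 <= nsq x * nsq y.
Proof.
have [y0|ny] := eqVneq (nsq y) 0.
  by rewrite (nsq_eq0 y0) /rip ip0r /= expr0n /= nsq0 mulr0.
have np : 0 < nsq y by rewrite lt_def ny nsq_ge0.
pose s := rip x y / nsq y.
have := nsq_ge0 (x + (- s)%:C *: y).
rewrite nsqD nsqZ caR real_normK ?num_real // ripC ripRl ripC.
rewrite /s => h.
have e : nsq x + (- (rip x y / nsq y)) ^+ 2 * nsq y + 2 * (- (rip x y / nsq y) * rip x y)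
  = nsq x - rip x y ^+ 2 / nsq y.
  by field.
rewrite e subr_ge0 ler_pdivrMr // in h.
Qed.

Lemma rip_le x y : rip x y <= hnorm ip x * hnorm ip y.
Proof.
apply: (le_trans (ler_norm _)).
rewrite -(ler_pXn2r (n:=2)) ?nnegrE ?normr_ge0 ?mulr_ge0 ?hnorm_ge0 //.
by rewrite real_normK ?num_real // exprMn !hnormK rip_cs.
Qed.

Lemma hnormD x y : hnorm ip (x + y) <= hnorm ip x + hnorm ip y.
Proof.
rewrite -(ler_pXn2r (n:=2)) ?nnegrE ?addr_ge0 ?hnorm_ge0 //.
rewrite hnormK nsqD sqrrD !hnormK -mulr_natl.
have := rip_le x y; lra.
Qed.

End IP.

Section Ops.
Variables (R : realType) (H : lmodType R[i]) (ip : H -> H -> R[i]).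
Hypothesis hip : is_inner_product ip.
Implicit Types (a b c : R[i]) (x y z : H) (T S : H -> H).
Local Notation hn := (hnorm ip).

Lemma cs x y : ca (ip x y) <= hn x * hn y.
Proof.
set c := ip x y.
have e : rip ip (c^* *: x) y = ca c ^+ 2.
  by rewrite /rip (ipZl hip) -/c mulrC mulJ.
have := rip_le hip (c^* *: x) y; rewrite e (hnormZ hip) caJ.
have [c0|cn] := eqVneq (ca c) 0.
  by rewrite c0 => _; apply: mulr_ge0; apply: hnorm_ge0.
have cp : 0 < ca c by rewrite lt_def cn ca_ge0.
by rewrite expr2 -mulrA ler_pM2l.
Qed.

Lemma hnorm_sum (I : Type) (r : seq I) (P : pred I) (F : I -> H) :
  hn (\sum_(i <- r | P i) F i) <= \sum_(i <- r | P i) hn (F i).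
Proof.
elim/big_rec2: _; first by rewrite (hnorm0 hip).
by move=> i y1 y2 _ h; apply: (le_trans (hnormD hip _ _)); rewrite lerD2l.
Qed.

Lemma lin0 T : linear_op T -> T 0 = 0.
Proof.
move=> hT; have := hT 1 0 0; rewrite scaler0 addr0 scale1r => h.
by apply: (addrI (T 0)); rewrite addr0 -h.
Qed.

Lemma linD T : linear_op T -> forall x y, T (x + y) = T x + T y.
Proof. by move=> hT x y; rewrite -[x in LHS]scale1r hT scale1r. Qed.

Lemma linZ T : linear_op T -> forall a x, T (a *: x) = a *: T x.
Proof. by move=> hT a x; rewrite -[_ *: _]addr0 hT lin0 // addr0. Qed.

Lemma linN T : linear_op T -> forall x, T (- x) = - T x.
Proof. by move=> hT x; rewrite -scaleN1r linZ // scaleN1r. Qed.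

Lemma linB T : linear_op T -> forall x y, T (x - y) = T x - T y.
Proof. by move=> hT x y; rewrite linD // linN. Qed.

Lemma lin_sum T : linear_op T -> forall (I : Type) (r : seq I) (P : pred I) (F : I -> H),
  T (\sum_(i <- r | P i) F i) = \sum_(i <- r | P i) T (F i).
Proof. by move=> hT I r P F; apply: (big_morph T (linD hT) (lin0 hT)). Qed.

Lemma opnorm_le T M : 0 <= M -> (forall x, hn (T x) <= M * hn x) -> opnorm ip T <= M.
Proof.
move=> M0 hb; apply: ge_sup.
  by exists (hn (T 0)), 0 => //; rewrite /= (hnorm0 hip) ler01.
move=> _ [x /= hx <-]; apply: (le_trans (hb x)).
by rewrite -[leRHS]mulr1 ler_wpM2l.
Qed.

Lemma opnorm_ub T M : (forall x, hn (T x) <= M * hn x) -> forall x, hn x <= 1 ->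
  hn (T x) <= opnorm ip T.
Proof.
move=> hb x hx; apply: ub_le_sup; last by exists x.
exists `|M| => _ [y /= hy <-]; apply: (le_trans (hb y)).
apply: (le_trans (ler_norm _)); rewrite normrM (ger0_norm (hnorm_ge0 _ y)).
by rewrite -[leRHS]mulr1 ler_wpM2l.
Qed.

Lemma opnorm_ge0 T : bounded_op ip T -> 0 <= opnorm ip T.
Proof.
move=> [hl [M hb]]; have := opnorm_ub hb (x := 0).
by rewrite lin0 // (hnorm0 hip) ler01 => /(_ isT).
Qed.

Lemma bounded_tensor f g : bounded_op ip (tensor ip f g).
Proof.
split.
  by move=> a x y; rewrite /tensor (ipDZl hip) scalerDl scalerA.
exists (hn g * hn f) => x; rewrite /tensor (hnormZ hip).
by rewrite mulrAC ler_wpM2r ?hnorm_ge0 // mulrC cs.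
Qed.

Lemma opnorm_tensor f g : opnorm ip (tensor ip f g) <= hn f * hn g.
Proof.
apply: opnorm_le; first by apply: mulr_ge0; apply: hnorm_ge0.
move=> x; rewrite /tensor (hnormZ hip).
by rewrite mulrC -mulrA ler_wpM2l ?hnorm_ge0 // mulrC cs.
Qed.

Lemma bounded_id : bounded_op ip id.
Proof. by split => //; exists 1 => x; rewrite mul1r. Qed.

Lemma opnorm_id : opnorm ip id <= 1.
Proof. by apply: opnorm_le => // x; rewrite mul1r. Qed.

Lemma bounded_comp T S : bounded_op ip T -> bounded_op ip S -> bounded_op ip (fun x => T (S x)).
Proof.
move=> [lT [M hM]] [lS [N hN]]; split.
  by move=> a x y; rewrite lS lT.
exists (`|M| * `|N|) => x; apply: (le_trans (hM _)).
apply: (le_trans (ler_norm _)); rewrite normrM (ger0_norm (hnorm_ge0 _ _)) -mulrA.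
rewrite ler_wpM2l //; apply: (le_trans (hN x)); apply: (le_trans (ler_norm _)).
by rewrite normrM (ger0_norm (hnorm_ge0 _ _)).
Qed.

End Ops.

Section Ideal.
Variables (R : realType) (H : lmodType R[i]) (ip : H -> H -> R[i]).
Hypothesis hip : is_inner_product ip.
Variables (U : set (H -> H)) (nU : (H -> H) -> R).
Hypothesis hU : is_normed_operator_ideal ip U nU.
Implicit Types (a b c : R[i]) (x y z : H) (T S A B : H -> H).
Local Notation hn := (hnorm ip).

Ltac dU := case: hU => [[hb [h0 [hD hZ]]] [hid [hfin [hcomp [[hge [heq [htri hhom]]] [hideal [hadj [hcompl [hdense htens]]]]]]]]].

Lemma U_bounded T : U T -> bounded_op ip T.
Proof. by dU; apply: hb. Qed.

Lemma U_lin T : U T -> linear_op T.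
Proof. by move/U_bounded => []. Qed.

Lemma U0 : U (fun _ => 0).
Proof. by dU. Qed.

Lemma UD S T : U S -> U T -> U (fun x => S x + T x).
Proof. by dU; apply: hD. Qed.

Lemma UZ a T : U T -> U (fun x => a *: T x).
Proof. by dU; apply: hZ. Qed.

Lemma UN T : U T -> U (fun x => - T x).
Proof. by move=> h; have := UZ (-1) h; under eq_fun do rewrite scaleN1r. Qed.

Lemma UB S T : U S -> U T -> U (fun x => S x - T x).
Proof. by move=> hS hT; apply: UD => //; apply: UN. Qed.

Lemma U_fin F : finite_rank ip F -> U F.
Proof. by dU; apply: hfin. Qed.

Lemma nU_ge0 T : U T -> 0 <= nU T.
Proof. by dU; apply: hge. Qed.

Lemma nUD S T : U S -> U T -> nU (fun x => S x + T x) <= nU S + nU T.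
Proof. by dU; apply: htri. Qed.

Lemma nUZ a T : U T -> nU (fun x => a *: T x) = ca a * nU T.
Proof. by dU; apply: hhom. Qed.

Lemma nU_tensor f g : nU (tensor ip f g) = hn f * hn g.
Proof. by dU; apply: htens. Qed.

Lemma nU_ideal A T B : bounded_op ip A -> U T -> bounded_op ip B ->
  nU (fun x => A (T (B x))) <= opnorm ip A * nU T * opnorm ip B.
Proof. by dU; apply: hideal. Qed.

Lemma nU_dense T : U T -> forall eps : R, 0 < eps ->
  exists F, finite_rank ip F /\ nU (fun x => T x - F x) < eps.
Proof. by dU; apply: hdense. Qed.

Lemma caN1 : ca (-1 : R[i]) = 1.
Proof. by rewrite -(rmorph1 (real_complex R)) -rmorphN caR normrN normr1. Qed.

Lemma nUN T : U T -> nU (fun x => - T x) = nU T.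
Proof.
move=> h; have := nUZ (-1) h; rewrite caN1 mul1r => <-.
by congr nU; apply: funext => x; rewrite scaleN1r.
Qed.

Lemma nUB S T : U S -> U T -> nU (fun x => S x - T x) = nU (fun x => T x - S x).
Proof.
move=> hS hT; rewrite -nUN; last exact: UB.
by congr nU; apply: funext => x; rewrite opprB.
Qed.

Lemma U_tensor f g : U (tensor ip f g).
Proof.
apply: U_fin; split; first exact: bounded_tensor.
exists 2, 1, (fun _ => f); split => // x.
by exists (fun _ => ip x g); rewrite big_ord1.
Qed.

Lemma U_sum n (F : nat -> H -> H) : (forall i, (i < n)%N -> U (F i)) ->
  U (fun x => \sum_(i < n) F i x).
Proof.
elim: n => [|n IH] hF.
  by have := U0; congr U; apply: funext => x; rewrite big_ord0.
have -> : (fun x => \sum_(i < n.+1) F i x) = (fun x => \sum_(i < n) F i x + F n x).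
  by apply: funext => x; rewrite big_ord_recr.
apply: UD; first by apply: IH => i hi; apply: hF; apply: ltnW.
exact: hF.
Qed.

Lemma nU_sum n (F : nat -> H -> H) : (forall i, (i < n)%N -> U (F i)) ->
  nU (fun x => \sum_(i < n) F i x) <= \sum_(i < n) nU (F i).
Proof.
elim: n => [|n IH] hF.
  rewrite big_ord0; have : nU (fun _ => 0) = 0.
    by have := nUZ 0 U0; rewrite ca0 mul0r; under eq_fun do rewrite scale0r.
  by move=> e; rewrite -e le_eqVlt; apply/orP; left; apply/eqP; congr nU; apply: funext => x; rewrite big_ord0.
have -> : (fun x => \sum_(i < n.+1) F i x) = (fun x => \sum_(i < n) F i x + F n x).
  by apply: funext => x; rewrite big_ord_recr.
rewrite big_ord_recr /=.
have hF' : forall i, (i < n)%N -> U (F i) by move=> i hi; apply: hF; apply: ltnW.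
apply: (le_trans (nUD (U_sum hF') (hF n (ltnSn n)))).
by rewrite lerD2r IH.
Qed.

Lemma nU_left A T M : U T -> bounded_op ip A -> 0 <= M ->
  (forall x, hn (A x) <= M * hn x) -> nU (fun x => A (T x)) <= M * nU T.
Proof.
move=> hT hA M0 hM; have := nU_ideal hA hT (@bounded_id _ _ ip) => h.
apply: (le_trans h); rewrite -[leRHS]mulr1.
have o1 := opnorm_id hip; have o2 := opnorm_le hip M0 hM.
have g1 := opnorm_ge0 hip hA; have g2 := opnorm_ge0 hip (@bounded_id _ _ ip).
have g3 := nU_ge0 hT.
apply: ler_pM => //; first by apply: mulr_ge0.
by apply: ler_pM.
Qed.

Lemma nU_right A T M : U T -> bounded_op ip A -> 0 <= M ->
  (forall x, hn (A x) <= M * hn x) -> nU (fun x => T (A x)) <= M * nU T.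
Proof.
move=> hT hA M0 hM; have := nU_ideal (@bounded_id _ _ ip) hT hA => h.
apply: (le_trans h); rewrite -[leRHS]mulr1.
have o1 := opnorm_id hip; have o2 := opnorm_le hip M0 hM.
have g1 := opnorm_ge0 hip hA; have g2 := opnorm_ge0 hip (@bounded_id _ _ ip).
have g3 := nU_ge0 hT.
have -> : opnorm ip id * nU T * opnorm ip A = (opnorm ip A * nU T) * opnorm ip id by ring.
apply: ler_pM => //; first by apply: mulr_ge0.
by apply: ler_pM.
Qed.

End Ideal.

Lemma archi_inv (R : realType) (d : R) : 0 < d ->
  exists N : nat, forall n, (N <= n)%N -> (n.+1%:R)^-1 < d.
Proof.
move=> d0; have hi : 0 <= d^-1 by rewrite invr_ge0 ltW.
have := archi_boundP hi.
set N := Num.Def.archi_bound _ => hN; exists N => n hn.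
rewrite invf_plt ?posrE ?ltr0Sn //.
apply: (lt_le_trans hN); rewrite ler_nat; exact: leqW.
Qed.

Section Proj.
Variables (R : realType) (H : lmodType R[i]) (ip : H -> H -> R[i]).
Hypothesis hip : is_inner_product ip.
Implicit Types (a b c : R[i]) (x y z : H) (T S : H -> H).
Local Notation hn := (hnorm ip).
Local Notation nsq := (nsq ip).

Lemma ripNr x y : rip ip x (- y) = - rip ip x y.
Proof. by rewrite /rip (ipNr hip); case: (ip x y). Qed.

Lemma nsqN x : nsq (- x) = nsq x.
Proof. by rewrite -!(hnormK hip) (hnormN hip). Qed.

Lemma parallelogram x y : nsq (x + y) + nsq (x - y) = 2 * nsq x + 2 * nsq y.
Proof. rewrite !(nsqD hip) nsqN ripNr; ring. Qed.

Lemma hn_lt_sq x (e : R) : 0 < e -> nsq x < e ^+ 2 -> hn x < e.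
Proof.
move=> e0 h; rewrite -(ltr_pXn2r (n:=2)) ?nnegrE ?hnorm_ge0 ?(ltW e0) //.
by rewrite (hnormK hip).
Qed.

Lemma hn_le_sq x (e : R) : 0 <= e -> hn x <= e -> nsq x <= e ^+ 2.
Proof.
move=> e0 h; rewrite -(hnormK hip) ler_pXn2r ?nnegrE ?hnorm_ge0 //.
Qed.


Lemma orth_of_min z m : (forall t : R[i], hn z <= hn (z + t *: m)) -> ip z m = 0.
Proof.
move=> hmin; set c := ip z m.
pose N := nsq m; pose s := (N + 1)^-1.
have N0 : 0 <= N by apply: nsq_ge0.
have s0 : 0 < s by rewrite invr_gt0; lra.
have sN : s * N < 1.
  by rewrite /s mulrC ltr_pdivrMr ?mul1r; lra.
pose t := - ((s%:C) * c).
have h := hmin t.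
have h2 : nsq z <= nsq (z + t *: m).
  by rewrite -!(hnormK hip) ler_pXn2r ?nnegrE ?hnorm_ge0.
rewrite (nsqD hip) (nsqZ hip) /rip (ipZr hip) -/c -/N in h2.
have K : ca c ^+ 2 = complex.Re c ^+ 2 + complex.Im c ^+ 2 by apply: ca_sqr.
have Kt : ca t ^+ 2 = s ^+ 2 * ca c ^+ 2.
  by rewrite /t caN caM caR ger0_norm ?(ltW s0) // exprMn.
rewrite Kt in h2.
have e : forall c' : R[i], complex.Re ((-((s%:C) * c'))^* * c') =
    - (s * (complex.Re c' ^+ 2 + complex.Im c' ^+ 2)).
  by move=> [p q]; rewrite conjE /=; ring.
rewrite /t e -K in h2.
have Kp : 0 <= ca c ^+ 2 by apply: sqr_ge0.
have : ca c ^+ 2 <= 0.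
  have h3 : 0 <= s * (s * ca c ^+ 2 * N - 2 * ca c ^+ 2) by nra.
  have h4 : 0 <= s * ca c ^+ 2 * N - 2 * ca c ^+ 2.
    by rewrite pmulr_rge0 in h3.
  nra.
move=> h5; have : ca c ^+ 2 = 0 by apply/eqP; rewrite eq_le h5 Kp.
by move/eqP; rewrite sqrf_eq0 => /eqP; apply: ca_eq0.
Qed.


Lemma zmod_id1 x (v mn p0 : H) : x - (- v + mn) = (x - p0 + v) - (mn - p0).
Proof. rewrite opprD opprK opprB -!addrA; congr (_ + _). by rewrite addrC -!addrA [p0 + _]addrCA subrr addr0. Qed.

Lemma real_bound (d ep eq de eps N : R) : 0 <= d -> 0 < ep -> ep <= de -> 0 < eq -> eq <= de ->
  de <= 1 -> de * (8 * d + 5) <= eps ^+ 2 -> 0 < eps -> 0 <= N ->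
  N + 4 * d ^+ 2 <= 2 * (d + ep) ^+ 2 + 2 * (d + eq) ^+ 2 -> N < eps ^+ 2.
Proof. move=> *; nra. Qed.


Lemma projection (M : set H) : M 0 ->
  (forall a m1 m2, M m1 -> M m2 -> M (a *: m1 + m2)) ->
  (forall u : nat -> H, cauchy_seq ip u -> exists l, seq_converges_to ip u l) ->
  forall x, exists z, (forall m, M m -> ip m z = 0) /\ (forall eps : R, 0 < eps -> exists m, M m /\ hn (x - z - m) < eps).
Proof.
move=> M0 MC hcomp x.
set D := [set hn (x - m) | m in M].
have Dn : D !=set0 by exists (hn (x - 0)), 0.
have Dlb : lbound D 0 by move=> _ [m _ <-]; apply: hnorm_ge0.
set d := inf D.
have d0 : 0 <= d by apply: lb_le_inf.
have dle : forall m, M m -> d <= hn (x - m).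
  by move=> m hm; apply: ge_inf; [exists 0 | exists m].
have hseq : forall n : nat, exists m, M m /\ hn (x - m) < d + (n.+1%:R)^-1.
  move=> n; have : d < d + (n.+1%:R)^-1 by rewrite ltrDl invr_gt0 ltr0Sn.
  by case/(inf_lt Dn) => _ [m hm <-] h; exists m.
have [f hf] := choice hseq.
have fM n : M (f n) by case: (hf n).
have Mhalf : forall m1 m2, M m1 -> M m2 -> M (2^-1 *: m1 + 2^-1 *: m2).
  by move=> m1 m2 h1 h2; apply MC => //; rewrite -[_ *: m2]addr0; apply MC.
have hc : cauchy_seq ip f.
  move=> eps e0.
  pose de := Num.min 1 (eps ^+ 2 / (8 * d + 5)).
  have de0 : 0 < de by rewrite lt_min ltr01 /= divr_gt0 ?exprn_gt0 //; lra.
  have de1 : de <= 1 by rewrite ge_min lexx.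
  have de2 : de * (8 * d + 5) <= eps ^+ 2.
    by rewrite -ler_pdivlMr; [rewrite ge_min lexx orbT | lra].
  have [N hN] := archi_inv de0.
  exists N => p q hp hq.
  have hp2 := hN _ hp; have hq2 := hN _ hq.
  have [_ ha] := hf p; have [_ hb] := hf q.
  set ep := (p.+1%:R)^-1 in hp2 ha; set eq := (q.+1%:R)^-1 in hq2 hb.
  have ep0 : 0 < ep by rewrite invr_gt0 ltr0Sn.
  have eq0 : 0 < eq by rewrite invr_gt0 ltr0Sn.
  apply: hn_lt_sq => //.
  have par := parallelogram (x - f q) (x - f p).
  have e1 : (x - f q) - (x - f p) = f p - f q.
    by rewrite opprB addrC addrA subrK.
  have e2 : (x - f q) + (x - f p) = (2 : R[i]) *: (x - (2^-1 *: f p + 2^-1 *: f q)).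
    rewrite scalerBr scalerDr !scalerA mulfV ?pnatr_eq0 // !scale1r.
    by rewrite scaler_nat mulr2n opprD [RHS]addrACA addrC.
  have c2 : ca (2 : R[i]) ^+ 2 = 4.
    by rewrite -(rmorph_nat (real_complex R) 2) caR ger0_norm // -natrX.
  rewrite e1 e2 (nsqZ hip) c2 in par.
  have hm := dle _ (Mhalf _ _ (fM p) (fM q)).
  have hm2 : d ^+ 2 <= nsq (x - (2^-1 *: f p + 2^-1 *: f q)).
    by rewrite -(hnormK hip) ler_pXn2r ?nnegrE ?hnorm_ge0.
  have hq3 : nsq (x - f q) <= (d + eq) ^+ 2.
    by apply: hn_le_sq; [lra | apply: ltW].
  have hp3 : nsq (x - f p) <= (d + ep) ^+ 2.
    by apply: hn_le_sq; [lra | apply: ltW].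
  apply: (@real_bound d ep eq de eps) => //; try exact: ltW.
    exact: nsq_ge0.
  lra.
have [p0 hp0] := hcomp f hc.
exists (x - p0).
have e3 : x - (x - p0) = p0 by rewrite opprB addrC subrK.
split; last first.
  move=> eps e0; have [N hN] := hp0 eps e0.
  by exists (f N); split => //; rewrite e3 (hnormB hip) hN.
have hz : hn (x - p0) <= d.
  apply/ler_addgt0Pr => e e0.
  have e2 : 0 < e / 2 by rewrite divr_gt0.
  have [N1 h1] := hp0 _ e2; have [N2 h2] := archi_inv e2.
  pose n := maxn N1 N2.
  have := h1 n (leq_maxl _ _); have := h2 n (leq_maxr _ _).
  have [_ hn1] := hf n.
  have tri := hnormD hip (x - f n) (f n - p0).
  have : x - f n + (f n - p0) = x - p0 by rewrite addrA subrK.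
  move=> ee; rewrite ee in tri.
  move=> ha hb; have := splitr e; move: (e / 2) (n.+1%:R^-1 : R) ha hb hn1 => q r ha hb hn1; lra.
have hzt : forall m, M m -> forall t : R[i], hn (x - p0) <= hn (x - p0 + t *: m).
  move=> m hm t; apply: (le_trans hz); apply/ler_addgt0Pr => e e0.
  have [N1 h1] := hp0 _ e0.
  have hMm : M (- t *: m + f N1) by apply MC.
  have := dle _ hMm; rewrite scaleNr (zmod_id1 x (t *: m) (f N1) p0).
  have := hnormD hip (x - p0 + t *: m) (- (f N1 - p0)); rewrite (hnormN hip).
  have := h1 N1 (leqnn _); lra.
move=> m hm; rewrite ipC // (orth_of_min (hzt m hm)).
exact: conjC0.
Qed.

End Proj.

Section Riesz.
Variables (R : realType) (H : lmodType R[i]) (ip : H -> H -> R[i]).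
Hypothesis hip : is_inner_product ip.
Hypothesis hcomp : forall u : nat -> H, cauchy_seq ip u -> exists l, seq_converges_to ip u l.
Implicit Types (a b c : R[i]) (x y z : H) (T S : H -> H).
Local Notation hn := (hnorm ip).
Local Notation nsq := (nsq ip).

Lemma riesz (phi : H -> R[i]) (C : R) :
  (forall a x y, phi (a *: x + y) = a * phi x + phi y) ->
  (forall x, ca (phi x) <= C * hn x) ->
  exists w, forall x, phi x = ip x w.
Proof.
move=> hl hb.
have phi0 : phi 0 = 0.
  have := hl 1 0 0; rewrite scaler0 addr0 mul1r => h.
  by apply: (addrI (phi 0)); rewrite addr0 -h.
have phiZ a x : phi (a *: x) = a * phi x by rewrite -[_ *: _]addr0 hl phi0 addr0.
have phiD x y : phi (x + y) = phi x + phi y by rewrite -[x]scale1r hl mul1r scale1r.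
have phiB x y : phi (x - y) = phi x - phi y.
  by rewrite phiD -scaleN1r phiZ mulN1r.
have [allz|] := pselect (forall x, phi x = 0).
  by exists 0 => x; rewrite allz (ip0r hip).
move=> /existsNP [x0 hx0].
pose M := [set m | phi m = 0].
have M0 : M 0 by [].
have MC : forall a m1 m2, M m1 -> M m2 -> M (a *: m1 + m2).
  by move=> a m1 m2; rewrite /M /= hl => -> ->; rewrite mulr0 addr0.
have [z [hz hap]] := projection hip M0 MC hcomp x0.
have pz : phi (x0 - z) = 0.
  apply: ca_eq0; apply/eqP; rewrite eq_le ca_ge0 andbT.
  apply/ler_addgt0Pr => e e0; rewrite add0r.
  have e1 : 0 < e / (`|C| + 1) by rewrite divr_gt0 // ltr_pwDr.
  have [m [hm hme]] := hap _ e1.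
  have : phi (x0 - z) = phi (x0 - z - m) by rewrite [RHS]phiB hm subr0.
  move=> ->; apply: (le_trans (hb _)).
  apply: (le_trans (ler_norm _)); rewrite normrM (ger0_norm (hnorm_ge0 _ _)).
  apply: (le_trans (ler_wpM2l (normr_ge0 _) (ltW hme))).
  rewrite mulrCA ger_pMr // ler_pdivrMr ?mul1r ?lerDl // ltr_pwDr //.
have pzx : phi z = phi x0.
  by move: pz; rewrite phiB => /eqP; rewrite subr_eq0 => /eqP.
have zn : ip z z != 0.
  apply/eqP => h; apply: hx0; rewrite -pzx.
  by case: hip => _ _ _ /(_ z h) ->.
exists ((phi z / ip z z)^* *: z) => x.
have hm : M (phi z *: x + (- phi x) *: z).
  by rewrite /M /= hl phiZ mulrC mulNr subrr.
have := hz _ hm; rewrite (ipDl hip) !(ipZl hip) (ipZr hip) conjCK mulNr.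
move/eqP; rewrite subr_eq0 => /eqP h.
by apply: (mulIf zn); rewrite -h; field.
Qed.

Lemma adjoint_ex T : bounded_op ip T -> exists Ts : H -> H, is_adjoint ip T Ts.
Proof.
move=> [hl [M hM]].
have h : forall y, exists w, forall x, ip (T x) y = ip x w.
  move=> y; apply: (@riesz (fun x => ip (T x) y) (`|M| * hn y)).
    by move=> a x z; rewrite hl (ipDZl hip).
  move=> x; apply: (le_trans (cs hip _ _)).
  rewrite mulrAC ler_wpM2r ?hnorm_ge0 //; apply: (le_trans (hM x)).
  apply: (le_trans (ler_norm _)); rewrite normrM (ger0_norm (hnorm_ge0 _ _)) //.
have [Ts hTs] := choice h.
by exists Ts => x y; rewrite hTs.
Qed.

End Riesz.

Section Decomp.
Variables (R : realType) (H : lmodType R[i]) (ip : H -> H -> R[i]).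
Hypothesis hip : is_inner_product ip.
Implicit Types (a b c : R[i]) (x y z : H) (T S : H -> H).
Local Notation hn := (hnorm ip).

Definition TS (n : nat) (u w : nat -> H) : H -> H :=
  fun x => \sum_(i < n) ip x (w i) *: u i.

Lemma sum_ext_last n (f g : nat -> H) :
  (forall i, (i < n)%N -> f i = g i) -> \sum_(i < n) f i = \sum_(i < n) g i.
Proof. by move=> h; apply: eq_bigr => i _; apply: h. Qed.

Lemma decomp_aux k : forall F (v : nat -> H), (exists Fs, is_adjoint ip F Fs) ->
  (forall x, exists c : nat -> R[i], F x = \sum_(i < k) c i *: v i) ->
  exists n u w, forall x, F x = TS n u w x.
Proof.
elim: k => [|k IH] F v [Fs hFs] hr.
  by exists 0, v, v => x; have [c ->] := hr x; rewrite /TS !big_ord0.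
pose vk := v k.
have [vk0|vkn] := eqVneq vk 0.
  apply: (IH F v); first by exists Fs.
  move=> x; have [c ->] := hr x; exists c.
  by rewrite big_ord_recr /= -/vk vk0 scaler0 addr0.
have zz : ip vk vk != 0.
  by apply: contra vkn => /eqP h; apply/eqP; case: hip => _ _ _; apply.
pose al := (ip vk vk)^-1.
pose Q y := y - (al * ip y vk) *: vk.
have QD y1 y2 : Q (y1 + y2) = Q y1 + Q y2.
  rewrite /Q (ipDl hip) mulrDr scalerDl opprD.
  by rewrite -!addrA; congr (_ + _); rewrite addrCA.
have QZ a y : Q (a *: y) = a *: Q y.
  by rewrite /Q (ipZl hip) scalerBr scalerA mulrCA.
have Q0 : Q 0 = 0 by rewrite /Q (ip0l hip) mulr0 scale0r subr0.
have Qk : Q vk = 0 by rewrite /Q mulVf // scale1r subrr.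
pose G x := Q (F x).
have hG : exists Gs, is_adjoint ip G Gs.
  exists (fun y => Fs y - (al * ip vk y)^* *: Fs vk) => x y.
  rewrite /G /Q (ipBl hip) (ipZl hip) hFs (ipBr hip) (ipZr hip) conjCK hFs.
  by congr (_ - _); rewrite -!mulrA [ip x _ * _]mulrC.
have hrG : forall x, exists c : nat -> R[i], G x = \sum_(i < k) c i *: Q (v i).
  move=> x; have [c hc] := hr x; exists c.
  rewrite /G hc (big_morph Q QD Q0) big_ord_recr /= QZ -/vk Qk scaler0 addr0.
  by apply: eq_bigr => i _; rewrite QZ.
have [n [u [w hw]]] := IH G (fun i => Q (v i)) hG hrG.
exists n.+1, (fun i => if i == n then vk else u i),
  (fun i => if i == n then (al^* *: Fs vk) else w i) => x.
rewrite /TS big_ord_recr /= eqxx.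
have -> : \sum_(i < n) ip x (if (i : nat) == n then al^* *: Fs vk else w i) *:
    (if (i : nat) == n then vk else u i) = TS n u w x.
  by apply: eq_bigr => i _; rewrite ltn_eqF.
by rewrite -hw /G /Q (ipZr hip) conjCK -hFs subrK.
Qed.

End Decomp.

Section GS.
Variables (R : realType) (H : lmodType R[i]) (ip : H -> H -> R[i]).
Hypothesis hip : is_inner_product ip.
Implicit Types (a b c : R[i]) (x y z : H) (T S : H -> H).
Local Notation hn := (hnorm ip).

Lemma conjR (s : R) : (s%:C)^* = s%:C :> R[i].
Proof. by rewrite conjE /= oppr0. Qed.

Definition orthonormal (m : nat) (e : nat -> H) :=
  forall i j, (i < m)%N -> (j < m)%N -> ip (e i) (e j) = (i == j)%:R.

Lemma sum_delta m (f : nat -> R[i]) k : (k < m)%N ->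
  \sum_(j < m) f j * (nat_of_ord j == k)%:R = f k.
Proof.
move=> hk; rewrite (bigD1 (Ordinal hk)) //= eqxx mulr1 big1 ?addr0 //.
move=> j hj; suff -> : (nat_of_ord j == k) = false by rewrite mulr0.
by apply/negbTE; apply: contra hj => /eqP h; apply/eqP; apply: val_inj.
Qed.

Lemma ip_Q_e m e x k : orthonormal m e -> (k < m)%N ->
  ip (\sum_(j < m) ip x (e j) *: e j) (e k) = ip x (e k).
Proof.
move=> ho hk; rewrite (ip_suml hip).
under eq_bigr => j _ do rewrite (ipZl hip) (ho _ _ (ltn_ord j) hk).
exact: (sum_delta (fun j => ip x (e j))).
Qed.

Lemma hn_e m e k : orthonormal m e -> (k < m)%N -> hn (e k) = 1.
Proof. by move=> ho hk; rewrite hnormE /nsq ho // eqxx /= sqrtr1. Qed.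

Lemma bessel m e x : orthonormal m e -> hn (\sum_(j < m) ip x (e j) *: e j) <= hn x.
Proof.
move=> ho; set q := \sum_(j < m) _.
have o : ip (x - q) q = 0.
  rewrite /q (ip_sumr hip) big1 // => j _.
  by rewrite (ipZr hip) (ipBl hip) ip_Q_e // subrr mulr0.
have he : nsq ip x = nsq ip q + nsq ip (x - q) + 2 * rip ip q (x - q).
  by rewrite -(nsqD hip) addrC subrK.
rewrite ripC // /rip o /= mulr0 addr0 in he.
rewrite -(ler_pXn2r (n:=2)) ?nnegrE ?hnorm_ge0 // !(hnormK hip) he.
by rewrite lerDl nsq_ge0.
Qed.

Lemma GS (Z : seq H) : exists m e, orthonormal m e /\
  forall z, z \in Z -> z = \sum_(j < m) ip z (e j) *: e j.
Proof.
elim: Z => [|z0 Z [m [e [ho hZ]]]].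
  by exists 0, (fun _ => 0); split => // i j.
set r := z0 - \sum_(j < m) ip z0 (e j) *: e j.
have rperp k : (k < m)%N -> ip r (e k) = 0.
  by move=> hk; rewrite /r (ipBl hip) ip_Q_e // subrr.
have [r0|rn] := eqVneq r 0.
  exists m, e; split => // z; rewrite inE => /orP [/eqP ->|]; last exact: hZ.
  by apply/eqP; rewrite -subr_eq0 -/r r0.
have hr : hn r != 0 by apply: contra rn => /eqP /(hnorm_eq0 hip) ->.
have hr0 : 0 < hn r by rewrite lt_def hr hnorm_ge0.
pose em := ((hn r)^-1)%:C *: r.
have rem : r = (hn r)%:C *: em.
  by rewrite /em scalerA -rmorphM mulfV // scale1r.
have emem : ip em em = 1.
  rewrite /em (ipZl hip) (ipZr hip) (ipxx hip) conjR -!rmorphM -(hnormK hip).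
  rewrite -(rmorph1 (real_complex R)); congr (_%:C); field.
  exact: hr.
have emk k : (k < m)%N -> ip em (e k) = 0.
  by move=> hk; rewrite /em (ipZl hip) rperp // mulr0.
pose e' i := if i == m then em else e i.
have e'lt i : (i < m)%N -> e' i = e i by move=> hi; rewrite /e' ltn_eqF.
exists m.+1, e'; split.
  move=> i j hi hj.
  have [->|him] := eqVneq i m; have [->|hjm] := eqVneq j m.
  - by rewrite /e' eqxx emem.
  - have hj' : (j < m)%N by rewrite ltn_neqAle hjm -ltnS.
    by rewrite /e' eqxx (negbTE hjm) emk // eq_sym (negbTE hjm).
  - have hi' : (i < m)%N by rewrite ltn_neqAle him -ltnS.
    by rewrite /e' eqxx (negbTE him) (ipC hip) emk // conjC0.
  - have hi' : (i < m)%N by rewrite ltn_neqAle him -ltnS.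
    have hj' : (j < m)%N by rewrite ltn_neqAle hjm -ltnS.
    by rewrite !e'lt //; apply: ho.
have sumE y : \sum_(j < m.+1) ip y (e' j) *: e' j =
    \sum_(j < m) ip y (e j) *: e j + ip y em *: em.
  rewrite big_ord_recr /= /e' eqxx; congr (_ + _).
  by apply: eq_bigr => j _; rewrite ltn_eqF.
move=> z; rewrite inE => /orP [/eqP ->|hz]; rewrite sumE.
  have : ip z0 em = (hn r)%:C.
    have -> : z0 = \sum_(j < m) ip z0 (e j) *: e j + r by rewrite /r addrC subrK.
    rewrite (ipDl hip) (ip_suml hip) big1; last first.
      by move=> j _; rewrite (ipZl hip) (ipC hip em) emk // conjC0 mulr0.
    by rewrite add0r {1}rem (ipZl hip) emem mulr1.
  by move=> ->; rewrite -rem /r addrC subrK.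
have : ip z em = 0.
  rewrite {1}(hZ z hz) (ip_suml hip) big1 // => j _.
  by rewrite (ipZl hip) (ipC hip em) emk // conjC0 mulr0.
by move=> ->; rewrite scale0r addr0 -hZ.
Qed.

End GS.

Section Core.
Variables (R : realType) (H : lmodType R[i]) (ip : H -> H -> R[i]).
Hypothesis hip : is_inner_product ip.
Implicit Types (a b c : R[i]) (x y z : H) (T S : H -> H).
Local Notation hn := (hnorm ip).

Lemma TS_adj m (a b : nat -> H) x w : ip (TS ip m a b x) w = ip x (TS ip m b a w).
Proof.
rewrite /TS (ip_suml hip) (ip_sumr hip); apply: eq_bigr => j _.
by rewrite (ipZl hip) (ipZr hip) -(ipC hip) mulrC.
Qed.

Lemma core m e (a b : nat -> H) (eta : R) : orthonormal ip m e -> 0 <= eta -> eta <= 1 ->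
  (forall j, (j < m)%N -> hn (a j - e j) <= eta) ->
  (forall j, (j < m)%N -> hn (b j - e j) <= eta) ->
  forall x, hn (TS ip m a b x - \sum_(j < m) ip x (e j) *: e j) <= 3 * m%:R * eta * hn x.
Proof.
move=> ho e0 e1 ha hb x.
rewrite /TS -sumrB; apply: (le_trans (hnorm_sum hip _ _ _)).
have -> : 3 * m%:R * eta * hn x = \sum_(j < m) (3 * eta * hn x).
  by rewrite sumr_const card_ord -mulr_natl; ring.
apply: ler_sum => j _.
have ->: ip x (b j) *: a j - ip x (e j) *: e j =
   ip x (b j) *: (a j - e j) + ip x (b j - e j) *: e j.
  by rewrite scalerBr (ipBr hip) scalerBl addrA subrK.
apply: (le_trans (hnormD hip _ _)); rewrite !(hnormZ hip) (hn_e ho (ltn_ord j)) mulr1.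
have hbj : hn (b j) <= 1 + eta.
  have -> : b j = e j + (b j - e j) by rewrite addrC subrK.
  apply: (le_trans (hnormD hip _ _)); rewrite (hn_e ho (ltn_ord j)) lerD2l.
  exact: hb.
have c1 := cs hip x (b j); have c2 := cs hip x (b j - e j).
have h1 := ha j (ltn_ord j); have h2 := hb j (ltn_ord j).
have g1 := hnorm_ge0 ip x; have g2 := ca_ge0 (ip x (b j)).
have g3 := hnorm_ge0 ip (a j - e j); have g4 := hnorm_ge0 ip (b j).
have t1 : ca (ip x (b j)) * hn (a j - e j) <= hn x * (1 + eta) * eta.
  apply: ler_pM => //; apply: (le_trans c1); apply: ler_wpM2l => //.
have t2 : ca (ip x (b j - e j)) <= hn x * eta.
  apply: (le_trans c2); apply: ler_wpM2l => //.
have t3 : hn x * eta * eta <= hn x * eta.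
  by rewrite -[leRHS]mulr1 ler_wpM2l // mulr_ge0.
lra.
Qed.

Lemma good_TS m e (a b : nat -> H) (eta eta' : R) (Z : seq H) :
  orthonormal ip m e -> (forall z, z \in Z -> z = \sum_(j < m) ip z (e j) *: e j) ->
  0 <= eta' -> eta' <= 1 -> eta <= 1 -> 3 * m%:R * eta' <= eta ->
  (forall j, (j < m)%N -> hn (a j - e j) <= eta') ->
  (forall j, (j < m)%N -> hn (b j - e j) <= eta') ->
  (forall x, hn (TS ip m a b x) <= 2 * hn x) /\
  (forall z, z \in Z -> hn (TS ip m a b z - z) <= eta * hn z).
Proof.
move=> ho hZ e0 e'1 e1 e2 ha hb.
have hc := core ho e0 e'1 ha hb.
split.
  move=> x; have -> : TS ip m a b x =
      (TS ip m a b x - \sum_(j < m) ip x (e j) *: e j) + \sum_(j < m) ip x (e j) *: e j.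
    by rewrite subrK.
  apply: (le_trans (hnormD hip _ _)).
  have := hc x; have := bessel hip x ho; have := hnorm_ge0 ip x.
  have : 3 * m%:R * eta' * hn x <= eta * hn x by apply: ler_wpM2r => //; apply: hnorm_ge0.
  have : eta * hn x <= hn x by rewrite -[leRHS]mul1r ler_wpM2r // hnorm_ge0.
  lra.
move=> z hz; rewrite {2}(hZ z hz); apply: (le_trans (hc z)).
by apply: ler_wpM2r => //; apply: hnorm_ge0.
Qed.

End Core.

Section Net.
Variables (R : realType) (H : lmodType R[i]) (ip : H -> H -> R[i]).
Hypothesis hip : is_inner_product ip.
Hypothesis hcomp : forall u : nat -> H, cauchy_seq ip u -> exists l, seq_converges_to ip u l.
Variables (U : set (H -> H)) (nU : (H -> H) -> R).
Hypothesis hU : is_normed_operator_ideal ip U nU.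
Implicit Types (a b c : R[i]) (x y z : H) (T S A B : H -> H).
Local Notation hn := (hnorm ip).

Lemma U_TS m u w : U (TS ip m u w).
Proof.
have := U_sum hU (n := m) (F := fun i => tensor ip (u i) (w i)) (fun i _ => U_tensor hip hU _ _).
by congr U.
Qed.

Lemma nU_TS m u w : nU (TS ip m u w) <= \sum_(i < m) hn (u i) * hn (w i).
Proof.
have := nU_sum hU (n := m) (F := fun i => tensor ip (u i) (w i)) (fun i _ => U_tensor hip hU _ _).
move=> h; apply: (le_trans h); apply: ler_sum => i _.
by rewrite (nU_tensor hU).
Qed.

Lemma fin_TS F : finite_rank ip F -> exists m u w, F = TS ip m u w.
Proof.
move=> [hb [n [k [v [_ hv]]]]].
have [Fs hFs] := adjoint_ex hip hcomp hb.
pose v' (n : nat) := if insub n is Some o then v o else 0.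
have hv' : forall x, exists c : nat -> R[i], F x = \sum_(i < k) c i *: v' i.
  move=> x; have [c hc] := hv x.
  exists (fun n => if insub n is Some o then c o else 0); rewrite hc.
  by apply: eq_bigr => i _; rewrite /v' valK.
have [m [u [w h]]] := decomp_aux hip (ex_intro _ Fs hFs) hv'.
by exists m, u, w; apply: funext.
Qed.

Lemma approx_TS A : U A -> forall eps : R, 0 < eps ->
  exists m u w, nU (fun x => A x - TS ip m u w x) < eps.
Proof.
move=> hA eps e0; have [F [hF hn]] := nU_dense hU hA e0.
have [m [u [w e]]] := fin_TS hF.
by exists m, u, w; rewrite -e.
Qed.

Definition leI (j1 j2 : seq H * nat) : Prop := {subset j1.1 <= j2.1} /\ (j1.2 <= j2.2)%N.

Lemma leI_directed : directed leI.
Proof.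
split.
- exact: (inhabits ([::], 0%N)).
- by move=> j; split.
- move=> j1 j2 j3 [a1 b1] [a2 b2]; split; last exact: leq_trans b1 b2.
  by move=> z hz; apply: a2; apply: a1.
- move=> j1 j2; exists (j1.1 ++ j2.1, maxn j1.2 j2.2); split; split => /=.
  + by move=> z hz; rewrite mem_cat hz.
  + exact: leq_maxl.
  + by move=> z hz; rewrite mem_cat hz orbT.
  + exact: leq_maxr.
Qed.

Lemma telesc (a b c d : H) : (a - b) + ((b - c) + (c - d)) = a - d.
Proof. by rewrite addrA [a - b + _]addrA subrK addrA subrK. Qed.


Lemma TS_comp_left m (a b : nat -> H) X Xs : is_adjoint ip X Xs ->
  (fun x => TS ip m a b (X x)) = TS ip m a (fun k => Xs (b k)).
Proof. by move=> hX; apply: funext => x; apply: eq_bigr => k _; rewrite hX. Qed.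

Lemma TS_comp_right m (a b : nat -> H) X : linear_op X ->
  (fun x => X (TS ip m a b x)) = TS ip m (fun k => X (a k)) b.
Proof.
move=> hX; apply: funext => x; rewrite /TS (lin_sum hX).
by apply: eq_bigr => k _; rewrite (linZ hX).
Qed.

Lemma TS_sub_left m (u w : nat -> H) Pm : linear_op Pm ->
  (fun x => Pm (TS ip m u w x) - TS ip m u w x) = TS ip m (fun i => Pm (u i) - u i) w.
Proof.
move=> hP; apply: funext => x; rewrite /TS (lin_sum hP) -sumrB.
by apply: eq_bigr => i _; rewrite (linZ hP) scalerBr.
Qed.

Lemma TS_sub_right m (u w : nat -> H) mp (a b : nat -> H) :
  (fun x => TS ip m u w (TS ip mp a b x) - TS ip m u w x) =
  TS ip m u (fun i => TS ip mp b a (w i) - w i).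
Proof.
apply: funext => x; rewrite {1 2}/TS -sumrB /TS.
apply: eq_bigr => i _; rewrite TS_adj // (ipBr hip) scalerBl //.
Qed.

Lemma net_lemma (P : seq H * nat -> (H -> H)) :
  (forall j, exists mp av bv, P j = TS ip mp av bv /\
     (forall x, hn (TS ip mp av bv x) <= 2 * hn x) /\
     (forall z, z \in j.1 -> hn (TS ip mp av bv z - z) <= (j.2.+1%:R)^-1 * hn z) /\
     (forall z, z \in j.1 -> hn (TS ip mp bv av z - z) <= (j.2.+1%:R)^-1 * hn z)) ->
  approx_identity U nU leI P.
Proof.
move=> hP; split.
  by move=> j; have [m [av [bv [-> _]]]] := hP j; apply: U_TS.
move=> A hA eps e0.
pose de := eps / 4.
have de0 : 0 < de by rewrite divr_gt0.
have [m [u [w hF]]] := approx_TS hA de0.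
set F := TS ip m u w in hF.
pose K := \sum_(i < m) hn (u i) * hn (w i).
have K0 : 0 <= K by apply: sumr_ge0 => i _; apply: mulr_ge0; apply: hnorm_ge0.
have dK : 0 < de / (K + 1) by rewrite divr_gt0 //; lra.
have [N hN] := archi_inv dK.
pose Z0 := [seq u i | i <- iota 0 m] ++ [seq w i | i <- iota 0 m].
exists (Z0, N) => j [hsub hle].
have [mp [av [bv [hPj [h2 [hz1 hz2]]]]]] := hP j.
set eta := (j.2.+1%:R)^-1 in hz1 hz2.
have het : eta < de / (K + 1) by apply: hN.
have eta0 : 0 <= eta by rewrite invr_ge0 ler0n.
have etaK : eta * K <= de.
  have : eta * (K + 1) < de by rewrite -ltr_pdivlMr //; lra.
  have : eta * K <= eta * (K + 1) by apply: ler_wpM2l => //; lra.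
  lra.
have uin i : (i < m)%N -> u i \in j.1.
  by move=> hi; apply: hsub; rewrite /= mem_cat map_f // mem_iota.
have win i : (i < m)%N -> w i \in j.1.
  by move=> hi; apply: hsub; rewrite /= mem_cat orbC map_f // mem_iota.
pose X := fun x => A x - F x.
have hX : U X by apply: (UB hU hA); apply: U_TS.
have X0 : 0 <= nU X by apply: (nU_ge0 hU).
have XL : linear_op X by apply: (U_lin hU).
have [Xs hXs] := adjoint_ex hip hcomp (U_bounded hU hX).
set Pm := TS ip mp av bv.
have hPb : bounded_op ip Pm by apply: (U_bounded hU); apply: U_TS.
have PL : linear_op Pm by case: hPb.
have UF : U F by apply: U_TS.
have U3 : U (fun x => F x - A x) by apply: (UB hU).
have n3 : nU (fun x => F x - A x) = nU X by rewrite (nUB hU).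
have hX' : nU X < de by [].
have ed : eps = 4 * de by rewrite /de; field.
rewrite hPj; split.
- have e1 : (fun x => Pm (A x) - A x) =
      (fun x => Pm (X x) + ((Pm (F x) - F x) + (F x - A x))).
    by apply: funext => x; rewrite /X (linB PL) telesc.
  have U1 : U (fun x => Pm (X x)) by rewrite /Pm (TS_comp_left mp av bv hXs); apply: U_TS.
  have e2 := TS_sub_left m u w PL; rewrite -/F in e2.
  have U2 : U (fun x => Pm (F x) - F x) by rewrite e2; apply: U_TS.
  have n1 : nU (fun x => Pm (X x)) <= 2 * nU X by apply: (nU_left hip hU) => //.
  have n2 : nU (fun x => Pm (F x) - F x) <= eta * K.
    rewrite e2; apply: (le_trans (nU_TS _ _ _)); rewrite /K mulr_sumr.
    apply: ler_sum => i _; rewrite mulrA; apply: ler_wpM2r; first by apply: hnorm_ge0.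
    exact: hz1 (uin _ (ltn_ord i)).
  rewrite e1; apply: (le_lt_trans (nUD hU U1 (UD hU U2 U3))).
  have := nUD hU U2 U3; rewrite n3; lra.
- have e1 : (fun x => A (Pm x) - A x) =
      (fun x => X (Pm x) + ((F (Pm x) - F x) + (F x - A x))).
    by apply: funext => x; rewrite /X telesc.
  have U1 : U (fun x => X (Pm x)) by rewrite /Pm (TS_comp_right mp av bv XL); apply: U_TS.
  have e2 := TS_sub_right m u w mp av bv; rewrite -/F -/Pm in e2.
  have U2 : U (fun x => F (Pm x) - F x) by rewrite e2; apply: U_TS.
  have n1 : nU (fun x => X (Pm x)) <= 2 * nU X by apply: (nU_right hip hU) => //.
  have n2 : nU (fun x => F (Pm x) - F x) <= eta * K.
    rewrite e2; apply: (le_trans (nU_TS _ _ _)); rewrite /K mulr_sumr.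
    apply: ler_sum => i _; rewrite mulrCA; apply: ler_wpM2l; first by apply: hnorm_ge0.
    exact: hz2 (win _ (ltn_ord i)).
  rewrite e1; apply: (le_lt_trans (nUD hU U1 (UD hU U2 U3))).
  have := nUD hU U2 U3; rewrite n3; lra.
Qed.

End Net.

Section Keys.
Variables (R : realType) (H : lmodType R[i]) (ip : H -> H -> R[i]).
Hypothesis hip : is_inner_product ip.
Hypothesis hcomp : forall u : nat -> H, cauchy_seq ip u -> exists l, seq_converges_to ip u l.
Variables (U : set (H -> H)) (nU : (H -> H) -> R).
Hypothesis hU : is_normed_operator_ideal ip U nU.
Implicit Types (x y z : H) (T S A B : H -> H).
Local Notation hn := (hnorm ip).

Lemma ip_uniq u v : (forall x, ip x u = ip x v) -> u = v.
Proof.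
move=> h; apply/eqP; rewrite -subr_eq0; apply/eqP.
case: hip => _ _ _; apply; by rewrite (ipBr hip) h subrr.
Qed.

Lemma adj_dense T Ts : linear_op T -> is_adjoint ip T Ts -> trivial_kernel T ->
  forall y (eps : R), 0 < eps -> exists g, hn (Ts g - y) < eps.
Proof.
move=> hT hTs hk y eps e0.
have TsL a g1 g2 : Ts (a *: g1 + g2) = a *: Ts g1 + Ts g2.
  apply: ip_uniq => x; rewrite -hTs (ipDr hip) (ipZr hip) !hTs.
  by rewrite (ipDr hip) (ipZr hip).
have Ts0 : Ts 0 = 0.
  have := TsL 1 0 0; rewrite scaler0 addr0 scale1r => h.
  by apply: (addrI (Ts 0)); rewrite addr0 -h.
pose M := [set v | exists g, v = Ts g].
have M0 : M 0 by exists 0.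
have MC : forall a m1 m2, M m1 -> M m2 -> M (a *: m1 + m2).
  by move=> a _ _ [g1 ->] [g2 ->]; exists (a *: g1 + g2); rewrite TsL.
have [z [hz hap]] := projection hip M0 MC hcomp y.
have z0 : z = 0.
  apply: hk; have := hz (Ts (T z)) (ex_intro _ _ erefl).
  rewrite (ipC hip) -hTs => /eqP; rewrite conjC_eq0 => /eqP h.
  by case: hip => _ _ _; apply.
have [m [[g ->] hm]] := hap _ e0.
by exists g; rewrite (hnormB hip); move: hm; rewrite z0 subr0.
Qed.

Lemma basis_for (Z : seq H) (n : nat) : exists m e (et : R), orthonormal ip m e /\
  (forall z, z \in Z -> z = \sum_(j < m) ip z (e j) *: e j) /\
  0 < et /\ et <= 1 /\ 3 * m%:R * et <= (n.+1%:R)^-1.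
Proof.
have [m [e [ho hZ]]] := GS hip Z.
exists m, e, ((n.+1%:R)^-1 / (3 * m%:R + 3)); split => //; split => //.
have h3 : 0 < 3 * m%:R + 3 :> R by rewrite ltr_pwDr // mulr_ge0.
have hn1 : (n.+1%:R)^-1 <= 1 :> R by rewrite invf_le1 // ler1n.
have hn0 : 0 < (n.+1%:R)^-1 :> R by rewrite invr_gt0.
split; first by rewrite divr_gt0.
split.
  rewrite ler_pdivrMr // mul1r; apply: (le_trans hn1); have := ler0n R m; lra.
rewrite mulrCA ger_pMr //; rewrite ler_pdivrMr // mul1r lerDl //.
Qed.

Definition goods (j : seq H * nat) mp (av bv : nat -> H) :=
  (forall x, hn (TS ip mp av bv x) <= 2 * hn x) /\
  (forall z, z \in j.1 -> hn (TS ip mp av bv z - z) <= (j.2.+1%:R)^-1 * hn z) /\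
  (forall z, z \in j.1 -> hn (TS ip mp bv av z - z) <= (j.2.+1%:R)^-1 * hn z).

Lemma good_from (j : seq H * nat) m e (et : R) (av bv : nat -> H) :
  orthonormal ip m e -> (forall z, z \in j.1 -> z = \sum_(k < m) ip z (e k) *: e k) ->
  0 < et -> et <= 1 -> 3 * m%:R * et <= (j.2.+1%:R)^-1 ->
  (forall k, (k < m)%N -> hn (av k - e k) <= et) ->
  (forall k, (k < m)%N -> hn (bv k - e k) <= et) ->
  goods j m av bv.
Proof.
move=> ho hZ e0 e1 e2 ha hb.
have hn1 : (j.2.+1%:R)^-1 <= 1 :> R by rewrite invf_le1 // ler1n.
have [g1 g2] := good_TS hip ho hZ (ltW e0) e1 hn1 e2 ha hb.
have [_ g3] := good_TS hip ho hZ (ltW e0) e1 hn1 e2 hb ha.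
by split.
Qed.

End Keys.

Section Main.
Variables (R : realType) (H : lmodType R[i]) (ip : H -> H -> R[i]).
Hypothesis hip : is_inner_product ip.
Hypothesis hcomp : forall u : nat -> H, cauchy_seq ip u -> exists l, seq_converges_to ip u l.
Variables (U : set (H -> H)) (nU : (H -> H) -> R).
Hypothesis hU : is_normed_operator_ideal ip U nU.
Implicit Types (x y z : H) (T S A B : H -> H).
Local Notation hn := (hnorm ip).

Lemma key_right T : U T -> dense_range ip T -> forall j : seq H * nat,
  exists Rj, U Rj /\ exists mp av bv,
    (fun x => T (Rj x)) = TS ip mp av bv /\ goods ip j mp av bv.
Proof.
move=> hT hd [Z n].
have [m [e [et [ho [hZ [e0 [e1 e2]]]]]]] := basis_for hip Z n.
have hx : forall k, exists x, hn (T x - e k) < et := fun k => hd (e k) et e0.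
have [xk hxk] := choice hx.
exists (TS ip m xk e); split; first exact: (U_TS hip hU).
exists m, (fun k => T (xk k)), e; split.
  exact: TS_comp_right (U_lin hU hT).
apply: (good_from (j := (Z, n)) hip ho hZ e0 e1 e2) => k hk; first exact: ltW (hxk k).
by rewrite subrr (hnorm0 hip) ltW.
Qed.

Lemma key_left T : U T -> trivial_kernel T -> forall j : seq H * nat,
  exists Lj, U Lj /\ exists mp av bv,
    (fun x => Lj (T x)) = TS ip mp av bv /\ goods ip j mp av bv.
Proof.
move=> hT hk [Z n].
have [Ts hTs] := adjoint_ex hip hcomp (U_bounded hU hT).
have [m [e [et [ho [hZ [e0 [e1 e2]]]]]]] := basis_for hip Z n.
have hg : forall k, exists g, hn (Ts g - e k) < et :=
  fun k => adj_dense hip hcomp (U_lin hU hT) hTs hk (e k) e0.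
have [gk hgk] := choice hg.
exists (TS ip m e gk); split; first exact: (U_TS hip hU).
exists m, e, (fun k => Ts (gk k)); split.
  exact: TS_comp_left hTs.
apply: (good_from (j := (Z, n)) hip ho hZ e0 e1 e2) => k hk2; last exact: ltW (hgk k).
by rewrite subrr (hnorm0 hip) ltW.
Qed.

Lemma right_dense T : U T -> approx_right_invertible U nU T -> dense_range ip T.
Proof.
move=> hT [I [le [Rj [[_ hrefl _ _] [hR [hPU hai]]]]]] y eps e0.
have [y0|yn] := eqVneq (hn y) 0.
  exists 0; rewrite (hnorm_eq0 hip y0) (lin0 (U_lin hU hT)) subr0 (hnorm0 hip) //.
have hy : 0 < hn y by rewrite lt_def yn hnorm_ge0.
have hA := U_tensor hip hU y y.
have [j0 hj0] := hai _ hA (eps * hn y) (mulr_gt0 e0 hy).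
have [h1 _] := hj0 j0 (hrefl j0).
exists (Rj j0 y).
have PL : linear_op (fun x => T (Rj j0 x)) by apply: (U_lin hU); apply: hPU.
have e1 : (fun x => T (Rj j0 (tensor ip y y x)) - tensor ip y y x) =
    tensor ip (T (Rj j0 y) - y) y.
  apply: funext => x; rewrite /tensor scalerBr.
  by rewrite (linZ PL (ip x y) y).
move: h1; rewrite e1 (nU_tensor hU) ltr_pM2r //.
Qed.

Lemma left_kernel T : U T -> approx_left_invertible U nU T -> trivial_kernel T.
Proof.
move=> hT [I [le [Lj [[_ hrefl _ _] [hL [hPU hai]]]]]] x hx.
apply: (hnorm_eq0 hip); apply/eqP; rewrite eq_le hnorm_ge0 andbT.
rewrite leNgt; apply/negP => hpos.
have hA := U_tensor hip hU x x.
have [j0 hj0] := hai _ hA (hn x * hn x) (mulr_gt0 hpos hpos).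
have [h1 _] := hj0 j0 (hrefl j0).
have LL : linear_op (Lj j0) by apply: (U_lin hU); apply: hL.
have TL : linear_op T := U_lin hU hT.
have e1 : (fun h => Lj j0 (T (tensor ip x x h)) - tensor ip x x h) = tensor ip (- x) x.
  apply: funext => h; rewrite /tensor (linZ TL) hx scaler0 (lin0 LL) sub0r.
  by rewrite scalerN.
move: h1; rewrite e1 (nU_tensor hU) (hnormN hip).
by rewrite ltxx.
Qed.

End Main.

Theorem theorem4p10 (R : realType) (H : lmodType R[i]) (ip : H -> H -> R[i])
    (U : set (H -> H)) (nU : (H -> H) -> R) (T : H -> H) :
  is_inf_dim_separable_hilbert ip ->
  is_normed_operator_ideal ip U nU ->
  U T ->
  (approx_right_invertible U nU T <-> dense_range ip T) /\
  (approx_left_invertible U nU T <-> trivial_kernel T).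
Proof.
move=> [hip hcomp _ _] hU hT; split; split.
- exact: right_dense.
- move=> hd; have [Rf hRf] := choice (key_right hip hU hT hd).
  exists (seq H * nat)%type, (leI (H:=H)), Rf; split; first exact: leI_directed.
  split; first by move=> j; case: (hRf j).
  apply: (net_lemma hip hcomp hU) => j.
  have [_ [mp [av [bv [e g]]]]] := hRf j.
  by exists mp, av, bv; split.
- exact: (left_kernel hip hU hT).
- move=> hk; have [Lf hLf] := choice (key_left hip hcomp hU hT hk).
  exists (seq H * nat)%type, (leI (H:=H)), Lf; split; first exact: leI_directed.
  split; first by move=> j; case: (hLf j).
  apply: (net_lemma hip hcomp hU) => j.
  have [_ [mp [av [bv [e g]]]]] := hLf j.
  by exists mp, av, bv; split.
Qed.
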